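(* Suppose that $G$ is a graph on $[n]$ with $\langle G\rangle_{K_4} = K_n$, and let $1 \leqslant L \leqslant n$. Then there exists a clique $K \subset K_n$ which is internally spanned by $G$, with $L \leqslant v(K) \leqslant 3L$.
   Context: $\langle G\rangle_{K_4}$ is the closure of $G$ under the $K_4$-bootstrap process on $K_n$: repeatedly add any edge which is the only missing edge of some copy of $K_4$. A clique $K \subset K_n$ is internally spanned by $G$ if $\langle G \cap K\rangle_{K_4} = K$, where $G \cap K$ is the set of edges of $G$ with both endpoints in $V(K)$. *)

(* Defs.v *)
From mathcomp Require Import all_boot.
Set Implicit Arguments. Unset Strict Implicit. Unset Printing Implicit Defensive.

(* A graph on a finite vertex type T is a set of edges, each edge being a
   2-element vertex set.  K_n is the set of all 2-element subsets. *)

(* K4-bootstrap closure <G>_{K4} as an inductive predicate on 2-sets: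
   an edge {a,b} is added if, for distinct a,b,c,d, the other five edges of
   the K4 on {a,b,c,d} are already present. *)
Inductive K4cl (T : finType) (G : {set {set T}}) : {set T} -> Prop :=
| K4cl_base e : e \in G -> K4cl G e
| K4cl_step a b c d : uniq [:: a; b; c; d] ->
    K4cl G [set a; c] -> K4cl G [set a; d] -> K4cl G [set b; c] ->
    K4cl G [set b; d] -> K4cl G [set c; d] -> K4cl G [set a; b].

(* G ∩ K, for K the clique on vertex set S *)
Definition induced (T : finType) (G : {set {set T}}) (S : {set T}) :
  {set {set T}} := [set e in G | e \subset S].

Definition internally_spanned (T : finType) (G : {set {set T}}) (S : {set T})
  : Prop :=
  forall e : {set T}, K4cl (induced G S) e <-> (#|e| = 2 /\ e \subset S).

(* Main.v *)
Require Import Defs.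
From mathcomp Require Import all_boot.
From mathcomp Require Import zify.
From Stdlib Require Import Classical.

Set Implicit Arguments. Unset Strict Implicit. Unset Printing Implicit Defensive.

Lemma K4cl_mono (T : finType) (G1 G2 : {set {set T}}) e :
  G1 \subset G2 -> K4cl G1 e -> K4cl G2 e.
Proof.
move=> sub; elim=> [f fG|a b c d u _ h1 _ h2 _ h3 _ h4 _ h5].
  by apply: K4cl_base; exact: (subsetP sub).
exact: K4cl_step u h1 h2 h3 h4 h5.
Qed.

Definition Q (T : finType) (H : {set {set T}}) (S : {set T}) :=
  forall u v, u \in S -> v \in S -> u != v -> K4cl H [set u; v].

Lemma Q_mono (T : finType) (H1 H2 : {set {set T}}) (S : {set T}) :
  H1 \subset H2 -> Q H1 S -> Q H2 S.
Proof. by move=> sub QS u v uS vS uv; apply: K4cl_mono sub _; apply: QS. Qed.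

Lemma Q_sub (T : finType) (H : {set {set T}}) (S S' : {set T}) :
  S' \subset S -> Q H S -> Q H S'.
Proof. by move=> sub QS u v uS vS; apply: QS; apply: (subsetP sub). Qed.

Lemma Q_merge (T : finType) (H : {set {set T}}) (A B : {set T}) c d :
  Q H A -> Q H B -> c \in A -> c \in B -> d \in A -> d \in B -> c != d ->
  Q H (A :|: B).
Proof.
move=> QA QB cA cB dA dB cd.
have mix: forall a b, a \in A -> a \notin B -> b \in B -> b \notin A ->
    K4cl H [set a; b].
  move=> a b aA aB bB bA.
  have ab: a != b by apply: contraNneq bA => <-.
  have ac: a != c by apply: contraNneq aB => ->.
  have ad: a != d by apply: contraNneq aB => ->.
  have bc: b != c by apply: contraNneq bA => ->.
  have bd: b != d by apply: contraNneq bA => ->.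
  apply: (@K4cl_step _ _ a b c d).
  - by rewrite /= !inE !negb_or ab ac ad bc bd cd.
  - exact: QA.
  - exact: QA.
  - exact: QB.
  - exact: QB.
  - exact: QA.
move=> u v; rewrite !inE => uAB vAB uv.
case uA: (u \in A); case vA: (v \in A); first exact: QA.
- case vB: (v \in B); last by rewrite vA vB in vAB.
  case uB: (u \in B); first exact: QB.
  by apply: mix; rewrite ?uA ?uB ?vA ?vB.
- case uB: (u \in B); last by rewrite uA uB in uAB.
  case vB: (v \in B); first exact: QB.
  by rewrite setUC; apply: mix; rewrite ?uA ?uB ?vA ?vB.
- case uB: (u \in B); last by rewrite uA uB in uAB.
  case vB: (v \in B); last by rewrite vA vB in vAB.
  exact: QB.
Qed.

Lemma Q_add (T : finType) (H : {set {set T}}) (A : {set T}) x y z :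
  Q H A -> x \in A -> y \in A -> x != y -> x != z -> y != z ->
  K4cl H [set x; z] -> K4cl H [set y; z] -> Q H (z |: A).
Proof.
move=> QA xA yA xy xz yz hx hy.
have key: forall u, u \in A -> u != z -> K4cl H [set u; z].
  move=> u uA uz; case: (eqVneq u x) => [->|ux] //.
  case: (eqVneq u y) => [->|uy] //.
  apply: (@K4cl_step _ _ u z x y).
  - by rewrite /= !inE !negb_or uz ux uy xy !(eq_sym z) xz yz.
  - exact: QA.
  - exact: QA.
  - by rewrite setUC.
  - by rewrite setUC.
  - exact: QA.
move=> u v; rewrite !inE => /predU1P[->|uA] /predU1P[->|vA] uv.
- by rewrite eqxx in uv.
- by rewrite setUC; apply: key => //; rewrite eq_sym.
- exact: key.
- exact: QA.
Qed.

Lemma mem2l (T : finType) (x y : T) (S : {set T}) : [set x; y] \subset S -> x \in S.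
Proof. by move=> sub; apply: (subsetP sub); rewrite !inE eqxx. Qed.
Lemma mem2r (T : finType) (x y : T) (S : {set T}) : [set x; y] \subset S -> y \in S.
Proof. by move=> sub; apply: (subsetP sub); rewrite !inE eqxx orbT. Qed.

Lemma span_of_Q (T : finType) (G : {set {set T}}) (S : {set T}) :
  (forall e, e \in G -> #|e| = 2) -> Q (induced G S) S ->
  internally_spanned G S.
Proof.
move=> hG QS e; split.
- elim=> [f|a b c d u _ h1 _ h2 _ h3 _ h4 _ h5].
    by rewrite inE => /andP[fG fS]; split => //; exact: hG.
  case: h1 => _ acS; case: h3 => _ bcS.
  have ab: a != b by move: u; rewrite /= !inE !negb_or => /andP[/andP[]].
  split; first by rewrite cards2 ab.
  apply/subsetP => w; rewrite !inE => /orP[]/eqP->.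
    exact: mem2l acS.
  exact: mem2l bcS.
- case=> /eqP/cards2P [u [v [uv ->]]] sub.
  by apply: QS => //; [exact: mem2l sub | exact: mem2r sub].
Qed.

Lemma Q_of_span (T : finType) (G : {set {set T}}) (S : {set T}) :
  internally_spanned G S -> Q (induced G S) S.
Proof.
move=> sp u v uS vS uv; apply/sp; split; first by rewrite cards2 uv.
by apply/subsetP => w; rewrite !inE => /orP[]/eqP->.
Qed.

Lemma induced_sub (T : finType) (G : {set {set T}}) (S1 S2 : {set T}) :
  S1 \subset S2 -> induced G S1 \subset induced G S2.
Proof.
move=> sub; apply/subsetP => e; rewrite !inE => /andP[-> eS] /=.
exact: subset_trans eS sub.
Qed.

Lemma span_merge (T : finType) (G : {set {set T}}) (A B : {set T}) c d :
  (forall e, e \in G -> #|e| = 2) ->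
  internally_spanned G A -> internally_spanned G B ->
  c \in A -> c \in B -> d \in A -> d \in B -> c != d ->
  internally_spanned G (A :|: B).
Proof.
move=> hG sA sB cA cB dA dB cd; apply: span_of_Q => //.
apply: (Q_merge (c:=c) (d:=d)) => //.
  exact: Q_mono (induced_sub G (subsetUl A B)) (Q_of_span sA).
exact: Q_mono (induced_sub G (subsetUr A B)) (Q_of_span sB).
Qed.

Lemma span_tri (T : finType) (G : {set {set T}}) (A B C : {set T}) x y z :
  (forall e, e \in G -> #|e| = 2) ->
  internally_spanned G A -> internally_spanned G B ->
  internally_spanned G C ->
  x \in A -> x \in B -> y \in A -> y \in C -> z \in B -> z \in C ->
  x != y -> x != z -> y != z ->
  internally_spanned G (A :|: B :|: C).
Proof.
move=> hG sA sB sC xA xB yA yC zB zC xy xz yz; apply: span_of_Q => //.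
set U := A :|: B :|: C.
have QA: Q (induced G U) A.
  apply: (Q_mono _ (Q_of_span sA)); apply: induced_sub.
  by apply/subsetP => w wA; rewrite !inE wA.
have QB: Q (induced G U) B.
  apply: (Q_mono _ (Q_of_span sB)); apply: induced_sub.
  by apply/subsetP => w wB; rewrite !inE wB ?orbT.
have QC: Q (induced G U) C.
  apply: (Q_mono _ (Q_of_span sC)); apply: induced_sub.
  by apply/subsetP => w wC; rewrite !inE wC ?orbT.
have QA': Q (induced G U) (z |: A).
  by apply: (Q_add QA xA yA xy xz yz); [apply: QB | apply: QC].
have Q1: Q (induced G U) ((z |: A) :|: C).
  by apply: (Q_merge (c:=y) (d:=z)) => //; rewrite !inE ?eqxx ?yA ?orbT.
have Q2: Q (induced G U) (((z |: A) :|: C) :|: B).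
  by apply: (Q_merge (c:=x) (d:=z)) => //; rewrite !inE ?eqxx ?xA ?orbT.
apply: Q_sub Q2; apply/subsetP => w; rewrite !inE.
by case/orP=> [/orP[]|] ->; rewrite ?orbT.
Qed.

Lemma cardU_le (T : finType) (A B : {set T}) : #|A :|: B| <= #|A| + #|B|.
Proof. by rewrite cardsU leq_subr. Qed.

Theorem lemma4p4 (n : nat) (G : {set {set 'I_n}}) :
  (forall e, e \in G -> #|e| = 2) ->
  (forall e : {set 'I_n}, K4cl G e <-> #|e| = 2) ->
  forall L : nat, 1 <= L <= n ->
  exists S : {set 'I_n}, internally_spanned G S /\ L <= #|S| <= 3 * L.
Proof.
move=> hG hcl L /andP[L1 Ln].
case: (classic (exists S : {set 'I_n},
          internally_spanned G S /\ L <= #|S| <= 3 * L)) => // Hno.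
exfalso.
pose small S := internally_spanned G S /\ #|S| < L.
have Hsmall: forall S, internally_spanned G S -> #|S| <= 3 * L -> #|S| < L.
  move=> S sp le; rewrite ltnNge; apply/negP => ge; apply: Hno.
  by exists S; split => //; rewrite ge le.
have merge: forall A B c d, small A -> small B ->
    c \in A -> c \in B -> d \in A -> d \in B -> c != d -> small (A :|: B).
  move=> A B c d [sA cA] [sB cB] h1 h2 h3 h4 h5.
  have sp := span_merge hG sA sB h1 h2 h3 h4 h5.
  split => //; apply: Hsmall => //.
  have := cardU_le A B; lia.
have tri: forall A B C x y z, small A -> small B -> small C ->
  x \in A -> x \in B -> y \in A -> y \in C -> z \in B -> z \in C ->
  x != y -> x != z -> y != z -> small (A :|: B :|: C).
  move=> A B C x y z [sA cA] [sB cB] [sC cC] h1 h2 h3 h4 h5 h6 h7 h8 h9.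
  have sp := span_tri hG sA sB sC h1 h2 h3 h4 h5 h6 h7 h8 h9.
  split => //; apply: Hsmall => //.
  have := cardU_le (A :|: B) C; have := cardU_le A B; lia.
have single: forall v, small [set v].
  move=> v; have sp: internally_spanned G [set v].
    apply: span_of_Q => // u w; rewrite !inE => /eqP-> /eqP->.
    by rewrite eqxx.
  split => //; apply: Hsmall => //; rewrite cards1; lia.
have claim: forall e, K4cl G e -> exists S, small S /\ e \subset S.
  move=> e; elim.
  - move=> f fG; exists f; split => //.
    have sp: internally_spanned G f.
      apply: span_of_Q => // u w uf wf uw.
      have ->: [set u; w] = f.
        apply/eqP; rewrite eqEcard hG // cards2 uw andbT.
        by apply/subsetP => t; rewrite !inE => /orP[]/eqP->.
      by apply: K4cl_base; rewrite inE fG subxx.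
    split => //; apply: Hsmall => //; rewrite hG //; lia.
  - move=> a b c d u _ [S1 [sm1 h1]] _ [S2 [sm2 h2]] _ [S3 [sm3 h3]]
       _ [S4 [sm4 h4]] _ [S5 [sm5 h5]].
    move: u; rewrite /= !inE !negb_or andbT.
    move=> u; have ab: a != b by case/and3P: u => /and3P[].
    have ac: a != c by case/and3P: u => /and3P[].
    have ad: a != d by case/and3P: u => /and3P[].
    have bc: b != c by case/and3P: u => _ /andP[].
    have bd: b != d by case/and3P: u => _ /andP[].
    have cd: c != d by case/and3P: u.
    have T1 := tri _ _ _ a c d sm1 sm2 sm5 (mem2l h1) (mem2l h2) (mem2r h1)
       (mem2l h5) (mem2r h2) (mem2r h5) ac ad cd.
    have T2 := tri _ _ _ b c d sm3 sm4 sm5 (mem2l h3) (mem2l h4) (mem2r h3)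
       (mem2l h5) (mem2r h4) (mem2r h5) bc bd cd.
    have M := merge _ _ c d T1 T2.
    eexists; split; first apply: M.
    + by rewrite !inE (mem2r h1) ?orbT.
    + by rewrite !inE (mem2r h3) ?orbT.
    + by rewrite !inE (mem2r h2) ?orbT.
    + by rewrite !inE (mem2r h4) ?orbT.
    + exact: cd.
    + apply/subsetP => t; rewrite !inE => /orP[]/eqP->.
      * by rewrite (mem2l h1) ?orbT.
      * by rewrite (mem2l h3) ?orbT.
have v0 : 'I_n := Ordinal (leq_trans L1 Ln).
have growth: forall k, k <= L -> exists S, small S /\ k <= #|S|.
  elim=> [_|k IH kL]; first by exists [set v0]; split.
  have [S [[sS cS] kS]] := IH (ltnW kL).
  have: 0 < #|~: S|.
    have := cardsC S; rewrite card_ord; lia.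
  case/card_gt0P => w; rewrite inE => wS.
  case: (set_0Vmem S) => [S0 | [x xS]].
    exists [set w]; split => //; rewrite cards1.
    move: kS; rewrite S0 cards0; lia.
  have xw: x != w by apply: contraNneq wS => <-.
  have [S1 [sm1 h1]] : exists S1, small S1 /\ [set x; w] \subset S1.
    by apply: claim; apply/hcl; rewrite cards2 xw.
  case: (leqP #|S| 1) => S1le.
    exists S1; split => //.
    have := subset_leq_card h1; rewrite cards2 xw; lia.
  have: 0 < #|S :\ x| by have := cardsD1 x S; rewrite xS; lia.
  case/card_gt0P => y; rewrite !inE => /andP[yx yS].
  have yw: y != w by apply: contraNneq wS => <-.
  have [S2 [sm2 h2]] : exists S2, small S2 /\ [set y; w] \subset S2.
    by apply: claim; apply/hcl; rewrite cards2 yw.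
  have U := tri _ _ _ x y w (conj sS cS) sm1 sm2 xS (mem2l h1) yS (mem2l h2)
     (mem2r h1) (mem2r h2) ltac:(by rewrite eq_sym) xw yw.
  exists (S :|: S1 :|: S2); split => //.
  have: w |: S \subset S :|: S1 :|: S2.
    apply/subsetP => t; rewrite !inE => /orP[/eqP->|->]; last by [].
    by rewrite (mem2r h1) orbT.
  move/subset_leq_card; rewrite cardsU1 wS; lia.
have [S [[_ cS] LS]] := growth L (leqnn L).
lia.
Qed.
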